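(* Let $k\ge 2$, let $H_0$ be a finite $k$-uniform hypergraph and let $(H_t)_{t\ge0}$ be the ILTH hypergraphs generated from $H_0$. Let $(a,b,c,d,e,f,g)$ be a 7-tuple of nonnegative integers and $t\ge 0$. If $H_t$ contains $x$ motifs with cardinality vector $(a,b,c,d,e,f,g)$, then $H_{t+1}$ contains at least $$x\big(g+(c+1)d+(b+1)f+(a+1)e+(a+1)(b+1)(c+1)\big)$$ motifs with cardinality vector $(a,b,c,d,e,f,g)$ (and hence of the same motif type).
   Context: A $k$-uniform hypergraph has every hyperedge a $k$-element subset of the vertex set. The ILTH process: given $H_t$, form $H_{t+1}$ by adding for each vertex $x\in V(H_t)$ a new vertex $x'$ (its clone), and taking $E(H_{t+1})=E(H_t)\cup\{(e\setminus\{x\})\cup\{x'\} : e\in E(H_t),\ x\in e\}$. A motif is given by three distinct hyperedges $e_1,e_2,e_3$ (ordered); its cardinality vector is $(|e_1\setminus(e_2\cup e_3)|,\ |e_2\setminus(e_1\cup e_3)|,\ |e_3\setminus(e_1\cup e_2)|,\ |(e_1\cap e_2)\setminus e_3|,\ |(e_2\cap e_3)\setminus e_1|,\ |(e_1\cap e_3)\setminus e_2|,\ |e_1\cap e_2\cap e_3|)$. Its motif type is the binary string recording which of these seven regions are nonempty, considered up to relabelling of $e_1,e_2,e_3$. *)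

(* Defs.v *)
From HB Require Import structures.
From mathcomp Require Import all_boot.
From mathcomp Require Import finmap.

Set Implicit Arguments.
Unset Strict Implicit.
Unset Printing Implicit Defensive.

Local Open Scope fset_scope.

Record hypergraph := Hypergraph {
  hverts : {fset nat};
  hedges : {fset {fset nat}} }.

Definition k_uniform (k : nat) (H : hypergraph) : Prop :=
  forall e, e \in hedges H -> (e `<=` hverts H) /\ #|` e| = k.

(* Offset used to name clones: the clone of x is x + clone_offset H,
   which is fresh (larger than every vertex of H). *)
Definition clone_offset (H : hypergraph) : nat := (\max_(v <- hverts H) v).+1.

Definition clone (H : hypergraph) (x : nat) : nat := x + clone_offset H.

Definition ilth_step (H : hypergraph) : hypergraph :=
  Hypergraph
    (hverts H `|` [fset clone H x | x in hverts H])
    (hedges H `|` [fset (e `\ x) `|` [fset clone H x] | e in hedges H, x in e]).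

Definition ILTH (H0 : hypergraph) (t : nat) : hypergraph := iter t ilth_step H0.

Definition card_vector (e1 e2 e3 : {fset nat}) : seq nat :=
  [:: #|` e1 `\` (e2 `|` e3)|;
      #|` e2 `\` (e1 `|` e3)|;
      #|` e3 `\` (e1 `|` e2)|;
      #|` (e1 `&` e2) `\` e3|;
      #|` (e2 `&` e3) `\` e1|;
      #|` (e1 `&` e3) `\` e2|;
      #|` e1 `&` e2 `&` e3| ].

Definition motif_count (H : hypergraph) (a b c d e f g : nat) : nat :=
  \sum_(e1 <- hedges H) \sum_(e2 <- hedges H) \sum_(e3 <- hedges H)
    [&& e1 != e2, e2 != e3, e1 != e3 &
        card_vector e1 e2 e3 == [:: a; b; c; d; e; f; g]].

(* Main.v *)
Require Import Defs.
From mathcomp Require Import all_boot.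
From mathcomp Require Import finmap.
From mathcomp Require Import zify.
Set Implicit Arguments.
Unset Strict Implicit.
Unset Printing Implicit Defensive.
Local Open Scope fset_scope.

Section Img.
Variable (f : nat -> nat) (U : {fset nat}).
Hypothesis finj : {in U &, injective f}.

Lemma imD (A B : {fset nat}) : A `<=` U -> B `<=` U ->
  f @` (A `\` B) = f @` A `\` f @` B.
Proof.
move=> /fsubsetP AU /fsubsetP BU; apply/fsetP => v; rewrite inE.
apply/imfsetP/andP => /=.
  move=> [k]; rewrite inE => /andP[kB kA] ->; split; last by apply/imfsetP; exists k.
  apply/negP => /imfsetP [k' /= k'B eq]; move/negP: kB; apply.
  by rewrite (finj (AU _ kA) (BU _ k'B) eq).
move=> [vB /imfsetP [k /= kA vE]]; exists k => //; rewrite inE kA andbT.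
by apply/negP => kB; move/negP: vB; apply; apply/imfsetP; exists k.
Qed.

Lemma imI (A B : {fset nat}) : A `<=` U -> B `<=` U ->
  f @` (A `&` B) = f @` A `&` f @` B.
Proof.
move=> /fsubsetP AU /fsubsetP BU; apply: imfsetI => x y xA yB; exact: finj (AU _ xA) (BU _ yB).
Qed.

Lemma imcard (A : {fset nat}) : A `<=` U -> #|` f @` A| = #|` A|.
Proof.
move=> /fsubsetP AU; apply/eqP/card_in_imfsetP => x y xA yA; exact: finj (AU _ xA) (AU _ yA).
Qed.

Lemma im_card_vector e1 e2 e3 : e1 `<=` U -> e2 `<=` U -> e3 `<=` U ->
  card_vector (f @` e1) (f @` e2) (f @` e3) = card_vector e1 e2 e3.
Proof.
move=> h1 h2 h3.
have hU : forall A B, A `<=` U -> B `<=` U -> A `|` B `<=` U by move=> A B ? ?; rewrite fsubUset; apply/andP.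
have hI : forall A B, A `<=` U -> A `&` B `<=` U by move=> A B ?; apply: fsubset_trans (fsubsetIl _ _) _.
have hD : forall A B, A `<=` U -> A `\` B `<=` U by move=> A B ?; apply: fsubset_trans (fsubsetDl _ _) _.
rewrite /card_vector -!imfsetU -!imD ?hU // -!imI ?hI // -!imD ?hI // !imcard ?hD ?hI //.
Qed.

Lemma im_inj (A B : {fset nat}) : A `<=` U -> B `<=` U -> f @` A = f @` B -> A = B.
Proof.
move=> /fsubsetP AU /fsubsetP BU E; apply/fsetP => v.
apply/idP/idP => vin.
  have : f v \in f @` B by rewrite -E; apply/imfsetP; exists v.
  by move=> /imfsetP [w /= wB eq]; rewrite (finj (AU _ vin) (BU _ wB) eq).
have : f v \in f @` A by rewrite E; apply/imfsetP; exists v.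
by move=> /imfsetP [w /= wA eq]; rewrite (finj (BU _ vin) (AU _ wA) eq).
Qed.
End Img.
Definition phi H (S : {fset nat}) (v : nat) : nat := if v \in S then clone H v else v.

Section Phi.
Variable H : hypergraph.
Local Notation V := (hverts H).

Lemma lt_off v : v \in V -> v < clone_offset H.
Proof. move=> vV; rewrite /clone_offset ltnS; exact: (@leq_bigmax_seq _ _ xpredT (fun x => x) _ vV). Qed.

Lemma phi_inj S : {in V &, injective (phi H S)}.
Proof.
move=> v w vV wV; have := lt_off vV; have := lt_off wV; rewrite /phi /clone.
case: (v \in S); case: (w \in S); lia.
Qed.

Lemma phi_lo S e v : e `<=` V -> v \in V -> (v \in phi H S @` e) = (v \in e) && (v \notin S).
Proof.
move=> /fsubsetP eV vV; have := lt_off vV; move=> vlt; apply/imfsetP/andP => /=.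
  move=> [w we]; have := lt_off (eV _ we); rewrite /phi /clone.
  case: ifP => wS; first lia.
  by move=> _ ->; rewrite wS.
move=> [ve vS]; exists v => //; by rewrite /phi (negbTE vS).
Qed.

Lemma phi_hi S e v : e `<=` V -> v \in V -> (clone H v \in phi H S @` e) = (v \in e) && (v \in S).
Proof.
move=> /fsubsetP eV vV; have := lt_off vV; move=> vlt; apply/imfsetP/andP => /=.
  move=> [w we]; have := lt_off (eV _ we); rewrite /phi /clone.
  case: ifP => wS; last lia.
  by move=> _ /addIn ->; rewrite we wS.
move=> [ve vS]; exists v => //; by rewrite /phi vS.
Qed.

Lemma phi_rec S S' e e' : e `<=` V -> e' `<=` V ->
  phi H S @` e = phi H S' @` e' -> e = e' /\ e `&` S = e' `&` S'.
Proof.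
move=> eV e'V E.
have key : forall v, v \in V -> ((v \in e) && (v \notin S) = (v \in e') && (v \notin S'))
     /\ ((v \in e) && (v \in S) = (v \in e') && (v \in S')).
  by move=> v vV; rewrite -(phi_lo S eV vV) -(phi_hi S eV vV) E phi_lo ?phi_hi.
split; apply/fsetP => v; rewrite ?inE.
  case vV: (v \in V); last first.
    apply/idP/idP => vin.
      by move/fsubsetP: eV => /(_ _ vin); rewrite vV.
    by move/fsubsetP: e'V => /(_ _ vin); rewrite vV.
  have [k1 k2] := key v vV.
  by case: (v \in e) (v \in S) (v \in e') (v \in S') k1 k2 => [] [] [] [].
case vV: (v \in V); last first.
  apply/idP/idP => /andP[vin _].
    by move/fsubsetP: eV => /(_ _ vin); rewrite vV.
  by move/fsubsetP: e'V => /(_ _ vin); rewrite vV.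
by have [_ ->] := key v vV.
Qed.

Lemma phi_id S e : e `&` S = fset0 -> phi H S @` e = e.
Proof.
move=> E; apply/fsetP => v; apply/imfsetP/idP => /=.
  move=> [w we ->]; rewrite /phi; case: ifP => // wS.
  have : w \in e `&` S by rewrite inE we wS.
  by rewrite E inE.
move=> ve; exists v => //; rewrite /phi; case: ifP => // vS.
have : v \in e `&` S by rewrite inE ve vS.
by rewrite E inE.
Qed.

Lemma phi_one S e x : e `&` S = [fset x] -> phi H S @` e = (e `\ x) `|` [fset clone H x].
Proof.
move=> E.
have hS : forall v, v \in e -> (v \in S) = (v == x).
  by move=> v ve; have := congr1 (fun A => v \in A) E; rewrite /= !inE ve.
have xe : x \in e.
  have : x \in e `&` S by rewrite E inE.
  by rewrite inE => /andP[].
apply/fsetP => v; rewrite !inE; apply/imfsetP/idP => /=.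
  move=> [w we ->]; rewrite /phi hS //; case: (eqVneq w x) => [->|wx]; first by rewrite eqxx orbT.
  by rewrite wx we.
case/orP => [/andP[vx ve]|/eqP ->].
  by exists v => //; rewrite /phi hS // (negbTE vx).
by exists x => //; rewrite /phi hS // eqxx.
Qed.
End Phi.
Definition ot := (option nat * option nat * option nat)%type.
Definition tt3 := ({fset nat} * {fset nat} * {fset nat})%type.
Definition oset (o : option nat) : {fset nat} := if o is Some x then [fset x] else fset0.
Definition sset (u : ot) : {fset nat} := oset u.1.1 `|` oset u.1.2 `|` oset u.2.
Definition valid (t : tt3) (u : ot) :=
  [/\ t.1.1 `&` sset u = oset u.1.1, t.1.2 `&` sset u = oset u.1.2 & t.2 `&` sset u = oset u.2].
Definition opts (R : {fset nat}) : seq (option nat) := None :: [seq Some x | x <- R].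

Section Ch.
Variables e1 e2 e3 : {fset nat}.
Definition c1 : seq ot := [seq (Some x, Some x, Some x) | x <- e1 `&` e2 `&` e3].
Definition c2 : seq ot := [seq (Some x, Some x, w) | x <- (e1 `&` e2) `\` e3, w <- opts (e3 `\` (e1 `|` e2))].
Definition c3 : seq ot := [seq (Some x, w, Some x) | x <- (e1 `&` e3) `\` e2, w <- opts (e2 `\` (e1 `|` e3))].
Definition c4 : seq ot := [seq (w, Some x, Some x) | x <- (e2 `&` e3) `\` e1, w <- opts (e1 `\` (e2 `|` e3))].
Definition c5 : seq ot := [seq (p, w) | p <- [seq (w1, w2) | w1 <- opts (e1 `\` (e2 `|` e3)), w2 <- opts (e2 `\` (e1 `|` e3))],
                   w <- opts (e3 `\` (e1 `|` e2))].
End Ch.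
Definition choices (t : tt3) : seq ot :=
  let: (e1, e2, e3) := t in c1 e1 e2 e3 ++ c2 e1 e2 e3 ++ c3 e1 e2 e3 ++ c4 e1 e2 e3 ++ c5 e1 e2 e3.

Ltac decomp := repeat match goal with
 | H : is_true (_ && _) |- _ => case/andP: H => ? ?
 | H : is_true (~~ (_ || _)) |- _ => rewrite negb_or in H
 end.

Ltac fin := repeat match goal with
 | H : is_true ?a, H' : is_true (~~ ?a) |- _ => by rewrite H in H'
 | H : is_true (~~ ?a) |- context[?a] => rewrite (negbTE H)
 | H : is_true ?a |- context[?a] => rewrite H
 end; rewrite /=; repeat match goal with |- context[?v \in ?e] => case: (v \in e) end; try done.

Ltac fin2 := rewrite ?eqxx; fin.

Lemma opts_mem w R : w \in opts R -> (w = None) \/ (exists2 z, w = Some z & z \in R).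
Proof. by rewrite inE => /orP[/eqP->|/mapP[z zR ->]]; [left|right; exists z]. Qed.

Lemma choices_valid t u : u \in choices t -> valid t u.
Proof.
case: t => [[e1 e2] e3]; rewrite /choices 4!mem_cat.
case/orP => [|/orP[|/orP[|/orP[]]]].
- move=> /mapP [x xR ->]; rewrite !inE in xR; decomp.
  rewrite /valid /sset /=; split; apply/fsetP => v; rewrite !inE;
  case: (eqVneq v x) => [vx|vx]; try subst v; fin.
- move=> /allpairsP [[x w] [/= xR /opts_mem [->|[z -> zR]] ->]]; rewrite !inE in xR; try rewrite !inE in zR; decomp;
  rewrite /valid /sset /=; split; apply/fsetP => v; rewrite !inE;
  case: (eqVneq v x) => [vx|vx]; try subst v; try case: (eqVneq v z) => [vz|vz]; try subst v; try case: (eqVneq x z) => [xz|xz]; try subst; fin.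
- move=> /allpairsP [[x w] [/= xR /opts_mem [->|[z -> zR]] ->]]; rewrite !inE in xR; try rewrite !inE in zR; decomp;
  rewrite /valid /sset /=; split; apply/fsetP => v; rewrite !inE;
  case: (eqVneq v x) => [vx|vx]; try subst v; try case: (eqVneq v z) => [vz|vz]; try subst v; try case: (eqVneq x z) => [xz|xz]; try subst; fin.
- move=> /allpairsP [[x w] [/= xR /opts_mem [->|[z -> zR]] ->]]; rewrite !inE in xR; try rewrite !inE in zR; decomp;
  rewrite /valid /sset /=; split; apply/fsetP => v; rewrite !inE;
  case: (eqVneq v x) => [vx|vx]; try subst v; try case: (eqVneq v z) => [vz|vz]; try subst v; try case: (eqVneq x z) => [xz|xz]; try subst; fin.
- rewrite /c5 => /flatten_mapP [p /flatten_mapP [w1 /opts_mem h1 /mapP [w2 /opts_mem h2 ->]] /mapP [w3 /opts_mem h3 ->]].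
  case: h1 => [->|[x1 -> x1R]]; case: h2 => [->|[x2 -> x2R]]; case: h3 => [->|[x3 -> x3R]];
  try rewrite !inE in x1R; try rewrite !inE in x2R; try rewrite !inE in x3R; decomp;
  rewrite /valid /sset /=; split; apply/fsetP => v; rewrite !inE;
  try case: (eqVneq v x1) => [vx|vx]; try subst v;
  try case: (eqVneq v x2) => [vx'|vx']; try subst v;
  try case: (eqVneq v x3) => [vx''|vx'']; try subst v;
  try case: (eqVneq x1 x2) => [xz|xz]; try subst;
  try case: (eqVneq x1 x3) => [xz'|xz']; try subst;
  try case: (eqVneq x2 x3) => [xz''|xz'']; try subst; fin.
Qed.

Lemma opts_uniq R : uniq (opts R).
Proof.
rewrite /opts /= map_inj_uniq ?fset_uniq ?andbT; last by move=> ? ? [].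
by apply/mapP => -[].
Qed.

Lemma size_opts R : size (opts R) = (#|` R|).+1.
Proof. by rewrite /= size_map. Qed.

Lemma arith (g d c f b e a : nat) : (g + (d * c.+1 + (f * b.+1 + (e * a.+1 + a.+1 * b.+1 * c.+1))) = g + c.+1 * d + b.+1 * f + a.+1 * e + a.+1 * b.+1 * c.+1)%N.
Proof. rewrite (mulnC d) (mulnC f) (mulnC e); set X := (a.+1 * b.+1 * c.+1)%N; set Y := (c.+1 * d)%N; set Z := (b.+1 * f)%N; set W := (a.+1 * e)%N; lia. Qed.

Lemma choices_size t a b c d e f g :
  card_vector t.1.1 t.1.2 t.2 = [:: a; b; c; d; e; f; g] ->
  size (choices t) = (g + c.+1 * d + b.+1 * f + a.+1 * e + a.+1 * b.+1 * c.+1)%N.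
Proof.
case: t => [[e1 e2] e3] /= [<- <- <- <- <- <- <-].
rewrite /choices 4!size_cat /c1 /c2 /c3 /c4 /c5 size_map !size_allpairs !size_opts.
exact: arith.
Qed.

Definition eqS (a b : option nat) := (a == b) && (a != None).
Definition pat (u : ot) := (eqS u.1.1 u.1.2, eqS u.1.2 u.2, eqS u.1.1 u.2).

Lemma pat_choices e1 e2 e3 :
  [/\ {in c1 e1 e2 e3, forall u, pat u = (true, true, true)},
      {in c2 e1 e2 e3, forall u, pat u = (true, false, false)},
      {in c3 e1 e2 e3, forall u, pat u = (false, false, true)},
      {in c4 e1 e2 e3, forall u, pat u = (false, true, false)} &
      {in c5 e1 e2 e3, forall u, pat u = (false, false, false)}].
Proof.
split.
- by move=> u /mapP [x xR ->]; rewrite /pat /eqS /= eqxx.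
- move=> u /allpairsP [[x w] [/= xR /opts_mem [->|[z -> zR]] ->]]; rewrite !inE in xR; try rewrite !inE in zR; decomp;
  rewrite /pat /eqS /= ?(inj_eq (@Some_inj nat)) ?eqxx; try case: (eqVneq (Some x) (Some z)) => [[xz]|xz]; try subst; fin2.
- move=> u /allpairsP [[x w] [/= xR /opts_mem [->|[z -> zR]] ->]]; rewrite !inE in xR; try rewrite !inE in zR; decomp;
  rewrite /pat /eqS /= ?(inj_eq (@Some_inj nat)) ?eqxx; try case: (eqVneq (Some x) (Some z)) => [[xz]|xz]; try subst; fin2.
- move=> u /allpairsP [[x w] [/= xR /opts_mem [->|[z -> zR]] ->]]; rewrite !inE in xR; try rewrite !inE in zR; decomp;
  rewrite /pat /eqS /= ?(inj_eq (@Some_inj nat)) ?eqxx; try case: (eqVneq (Some x) (Some z)) => [[xz]|xz]; try subst; fin2.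
- rewrite /c5 => u /flatten_mapP [p /flatten_mapP [w1 /opts_mem h1 /mapP [w2 /opts_mem h2 ->]] /mapP [w3 /opts_mem h3 ->]].
  case: h1 => [->|[x1 -> x1R]]; case: h2 => [->|[x2 -> x2R]]; case: h3 => [->|[x3 -> x3R]];
  try rewrite !inE in x1R; try rewrite !inE in x2R; try rewrite !inE in x3R; decomp;
  rewrite /pat /eqS /= ?(inj_eq (@Some_inj nat)) ?eqxx;
  try case: (eqVneq (Some x1) (Some x2)) => [[xz]|xz]; try subst;
  try case: (eqVneq (Some x1) (Some x3)) => [[xz']|xz']; try subst;
  try case: (eqVneq (Some x2) (Some x3)) => [[xz2]|xz2]; try subst; fin2.
Qed.

Lemma nohas (s1 s2 : seq ot) p : {in s1, forall u, pat u = p} -> {in s2, forall u, pat u != p} ->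
  ~~ has (mem s1) s2.
Proof.
move=> h1 h2; apply/hasPn => u us2; apply/negP => us1.
by move: (h2 u us2); rewrite (h1 u us1) eqxx.
Qed.

Lemma choices_uniq t : uniq (choices t).
Proof.
case: t => [[e1 e2] e3]; rewrite /choices.
have [p1 p2 p3 p4 p5] := pat_choices e1 e2 e3.
have u1 : uniq (c1 e1 e2 e3) by rewrite /c1 map_inj_uniq ?fset_uniq //; move=> x y [].
have h1 : ~~ has (mem (c1 e1 e2 e3)) (c2 e1 e2 e3 ++ c3 e1 e2 e3 ++ c4 e1 e2 e3 ++ c5 e1 e2 e3).
  by apply: (nohas p1) => u; rewrite 3!mem_cat => /orP[/p2->|/orP[/p3->|/orP[/p4->|/p5->]]].
have u2 : uniq (c2 e1 e2 e3).
  by rewrite /c2 allpairs_uniq ?fset_uniq ?opts_uniq //; move=> [x w] [x' w'] _ _ /= E; injection E; intros; subst.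
have h2 : ~~ has (mem (c2 e1 e2 e3)) (c3 e1 e2 e3 ++ c4 e1 e2 e3 ++ c5 e1 e2 e3).
  by apply: (nohas p2) => u; rewrite 2!mem_cat => /orP[/p3->|/orP[/p4->|/p5->]].
have u3 : uniq (c3 e1 e2 e3).
  by rewrite /c3 allpairs_uniq ?fset_uniq ?opts_uniq //; move=> [x w] [x' w'] _ _ /= E; injection E; intros; subst.
have h3 : ~~ has (mem (c3 e1 e2 e3)) (c4 e1 e2 e3 ++ c5 e1 e2 e3).
  by apply: (nohas p3) => u; rewrite 1!mem_cat => /orP[/p4->|/p5->].
have u4 : uniq (c4 e1 e2 e3).
  by rewrite /c4 allpairs_uniq ?fset_uniq ?opts_uniq //; move=> [x w] [x' w'] _ _ /= E; injection E; intros; subst.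
have h4 : ~~ has (mem (c4 e1 e2 e3)) (c5 e1 e2 e3).
  by apply: (nohas p4) => u /p5->.
have u5 : uniq (c5 e1 e2 e3).
  rewrite /c5; apply: allpairs_uniq; rewrite ?opts_uniq //.
    apply: allpairs_uniq; rewrite ?opts_uniq //; by move=> [x w] [x' w'] _ _ /= E; injection E; intros; subst.
  by move=> [p w] [p' w'] _ _ /= E; injection E; intros; subst.
by rewrite 4!cat_uniq u1 h1 u2 h2 u3 h3 u4 h4 u5.
Qed.

Definition wf (H : hypergraph) := forall e, e \in hedges H -> e `<=` hverts H.

Lemma wf_step H : wf H -> wf (ilth_step H).
Proof.
move=> w e; rewrite /ilth_step /= inE => /orP[/w eV|].
  by apply: fsubset_trans eV _; apply: fsubsetUl.
move=> /imfset2P [e' /= e'H [x /= xe' ->]].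
have e'V := w _ e'H.
rewrite fsubUset; apply/andP; split.
  apply: fsubset_trans (fsubsetDl _ _) _; apply: fsubset_trans e'V _; apply: fsubsetUl.
rewrite fsub1set inE; apply/orP; right; apply/imfsetP; exists x => //=.
by move/fsubsetP: e'V; apply.
Qed.

Lemma wf_ILTH k H0 t : k_uniform k H0 -> wf (ILTH H0 t).
Proof.
move=> ku; elim: t => [|t IH] /=.
  by move=> e /ku [].
exact: wf_step.
Qed.

Lemma newedge_mem H S e o : wf H -> e \in hedges H -> e `&` S = oset o ->
  phi H S @` e \in hedges (ilth_step H).
Proof.
move=> w eH; case: o => [x|] /= E.
  rewrite (phi_one H E) /ilth_step /= inE; apply/orP; right.
  apply/imfset2P; exists e => //; exists x => //.
  have : x \in e `&` S by rewrite E inE.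
  by rewrite inE => /andP[].
by rewrite (phi_id H E) /ilth_step /= inE eH.
Qed.

Definition trip (E : seq {fset nat}) : seq tt3 :=
  [seq (p, e3) | p <- [seq (e1, e2) | e1 <- E, e2 <- E], e3 <- E].
Definition isM (v : seq nat) (t : tt3) :=
  [&& t.1.1 != t.1.2, t.1.2 != t.2, t.1.1 != t.2 & card_vector t.1.1 t.1.2 t.2 == v].
Definition mot H v := [seq t <- trip (hedges H) | isM v t].

Lemma count_sum (T : Type) (P : pred T) s : count P s = \sum_(x <- s) P x.
Proof. by elim: s => [|x s IH]; rewrite ?big_nil ?big_cons //= IH. Qed.

Lemma motif_countE H a b c d e f g :
  motif_count H a b c d e f g = size (mot H [:: a; b; c; d; e; f; g]).
Proof.
by rewrite /mot size_filter count_sum /trip big_allpairs big_allpairs.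
Qed.

Lemma trip_uniq E : uniq E -> uniq (trip E).
Proof.
move=> uE; apply: allpairs_uniq => //.
  apply: allpairs_uniq => //; by move=> [x w] [x' w'] _ _ /= E'; injection E'; intros; subst.
by move=> [p w] [p' w'] _ _ /= E'; injection E'; intros; subst.
Qed.

Lemma mot_uniq H v : uniq (mot H v).
Proof. by rewrite filter_uniq // trip_uniq // fset_uniq. Qed.

Lemma trip_mem E t : (t \in trip E) = [&& t.1.1 \in E, t.1.2 \in E & t.2 \in E].
Proof.
case: t => [[e1 e2] e3] /=; apply/idP/idP.
  move=> /allpairsP [[p w] [/= hp wE E']]; move: hp => /allpairsP [[x y] [/= xE yE E'']]; subst.
  by case: E' => -> -> ->; rewrite xE yE wE.
move=> /and3P [h1 h2 h3].
apply: (allpairs_f (fun p w => (p, w))) => //; exact: (allpairs_f (fun x y => (x, y))).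
Qed.

Definition newt H (t : tt3) (u : ot) : tt3 :=
  ((phi H (sset u) @` t.1.1, phi H (sset u) @` t.1.2), phi H (sset u) @` t.2).

Lemma mot_mem H v t : t \in mot H v ->
  [/\ isM v t, t.1.1 \in hedges H, t.1.2 \in hedges H & t.2 \in hedges H].
Proof. by rewrite mem_filter trip_mem => /andP[? /and3P[? ? ?]]. Qed.

Lemma M1 H v t u : wf H -> t \in mot H v -> u \in choices t -> newt H t u \in mot (ilth_step H) v.
Proof.
move=> w /mot_mem [/and4P[n12 n23 n13 /eqP cv] h1 h2 h3] uc.
have [v1 v2 v3] := choices_valid uc.
have s1 := w _ h1; have s2 := w _ h2; have s3 := w _ h3.
have fi := @phi_inj H (sset u).
rewrite mem_filter trip_mem /= (newedge_mem w h1 v1) (newedge_mem w h2 v2) (newedge_mem w h3 v3) !andbT.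
rewrite /isM /= (im_card_vector fi s1 s2 s3) cv eqxx andbT.
apply/and3P; split; apply/negP => /eqP E.
- by move: n12; rewrite (im_inj fi s1 s2 E) eqxx.
- by move: n23; rewrite (im_inj fi s2 s3 E) eqxx.
- by move: n13; rewrite (im_inj fi s1 s3 E) eqxx.
Qed.

Lemma oset_inj a b : oset a = oset b -> a = b.
Proof.
case: a => [x|]; case: b => [y|] //= E.
- by have := fset11 x; rewrite E inE => /eqP ->.
- by have := fset11 x; rewrite E inE.
- by have := fset11 y; rewrite -E inE.
Qed.

Lemma M2 H v t t' u u' : wf H -> t \in mot H v -> t' \in mot H v ->
  u \in choices t -> u' \in choices t' -> newt H t u = newt H t' u' -> t = t' /\ u = u'.
Proof.
move=> w /mot_mem [_ h1 h2 h3] /mot_mem [_ h1' h2' h3'] uc uc' E.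
have [v1 v2 v3] := choices_valid uc.
have [v1' v2' v3'] := choices_valid uc'.
case: E => E1 E2 E3.
have [q1 r1] := phi_rec (w _ h1) (w _ h1') E1.
have [q2 r2] := phi_rec (w _ h2) (w _ h2') E2.
have [q3 r3] := phi_rec (w _ h3) (w _ h3') E3.
move: r1 r2 r3; rewrite v1 v2 v3 v1' v2' v3' => /oset_inj r1 /oset_inj r2 /oset_inj r3.
destruct t as [[a1 a2] a3], t' as [[b1 b2] b3], u as [[c1 c2] c3], u' as [[d1 d2] d3].
simpl in q1, q2, q3, r1, r2, r3; subst; split; reflexivity.
Qed.

Lemma sumn_const (T : eqType) (s : seq T) (F : T -> nat) N :
  (forall x, x \in s -> F x = N) -> sumn [seq F x | x <- s] = (size s * N)%N.
Proof.
elim: s => [|y s IH] h //=.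
rewrite h ?mem_head // IH ?mulSn // => z zs; apply: h; rewrite in_cons zs orbT. by [].
Qed.

Local Close Scope fset_scope.
Unset Implicit Arguments.

Theorem lemma3p2 (k : nat) (H0 : hypergraph) (a b c d e f g t x : nat) :
  2 <= k -> k_uniform k H0 ->
  motif_count (ILTH H0 t) a b c d e f g = x ->
  x * (g + c.+1 * d + b.+1 * f + a.+1 * e + a.+1 * b.+1 * c.+1)
    <= motif_count (ILTH H0 t.+1) a b c d e f g.
Proof.
move=> _ ku; rewrite !motif_countE => <-.
have w := @wf_ILTH k H0 t ku.
have -> : ILTH H0 t.+1 = ilth_step (ILTH H0 t) by [].
set H := ILTH H0 t in w *.
set v := [:: a; b; c; d; e; f; g].
set N := (g + c.+1 * d + b.+1 * f + a.+1 * e + a.+1 * b.+1 * c.+1)%N.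
pose L := [seq newt H t0 u | t0 <- mot H v, u <- choices t0].
have sL : size L = (size (mot H v) * N)%N.
  rewrite /L size_allpairs_dep; apply: sumn_const => t0 /mot_mem [/and4P[_ _ _ /eqP cv] _ _ _].
  exact: choices_size.
rewrite -sL; apply: uniq_leq_size.
  apply: allpairs_uniq_dep; first exact: mot_uniq.
    by move=> t0 _; exact: choices_uniq.
  move=> p1 p2 /allpairsPdep [t1 [u1 [m1 c1' ->]]] /allpairsPdep [t2 [u2 [m2 c2' ->]]] /= E.
  by have [-> ->] := M2 w m1 m2 c1' c2' E.
move=> y /allpairsPdep [t0 [u [m cu ->]]]; exact: M1.
Qed.
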